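(* Let $G$ be a finite nilpotent group and let $M,N$ be normal subgroups with $1<M\le N<G$ such that every $g\in G\setminus N$ is conjugate in $G$ to every element of $gM$. Then there is a prime $p$ such that both $M$ and $G/N$ are $p$-groups. *)

(* Defs.v *)
From mathcomp Require Import all_boot all_fingroup all_solvable.

(* Main.v *)
From mathcomp Require Import all_boot all_fingroup all_solvable.
Local Open Scope group_scope.

Lemma key {gT : finGroupType} {G M N : {group gT}} :
  nilpotent G -> M <| G -> 
  (forall g, g \in G :\: N -> forall m, m \in M -> g * m \in g ^: G) ->
  forall r, prime r -> r %| #|M| -> forall g, g \in G -> g.`_r^' \in N.
Proof.
move=> nilG /andP[sMG _] Hc r pr rM g gG.
apply/negPn/negP=> gN.
have gG' : g.`_r^' \in G :\: N by rewrite inE gN groupX.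
have rg : r^'.-elt g.`_r^' := p_elt_constt _ _.
set h := g.`_r^' in gG' rg *.
have [m mM om] := Cauchy pr rM.
have mG : m \in G := subsetP sMG m mM.
have hG : h \in G by move: gG'; rewrite inE => /andP[].
have chm : commute h m.
  have : <[h]> \subset 'C(<[m]>).
    apply: sub_nilpotent_cent2 nilG _ _ _; rewrite ?cycle_subG //.
    rewrite -!orderE om; exact: pnat_coprime (pnat_id pr) rg.
  rewrite cycle_subG => H; apply/cent1P; rewrite -cent_cycle; exact: H.
have := Hc h gG' m mM; case/imsetP=> x xG hmx.
have rhm : r^'.-elt (h * m) by rewrite hmx p_eltJ.
have : r^'.-elt (h^-1 * (h * m)).
  apply: p_eltM; first by rewrite /commute mulKg chm mulgK.
    by rewrite p_eltV.
  done.
rewrite mulKg /p_elt om pnatE // !inE eqxx //.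
Qed.

Theorem mainTheorem14 (gT : finGroupType) (G M N : {group gT}) :
  nilpotent G -> M <| G -> N <| G ->
  M != 1%G -> M \subset N -> N \proper G ->
  (forall g, g \in G :\: N -> forall m, m \in M -> g * m \in g ^: G) ->
  exists p : nat, [/\ prime p, p.-group M & p.-group (G / N)].
Proof.
move=> nilG nMG nNG hM sMN pNG Hc.
have M1 : 1 < #|M|.
  rewrite cardG_gt1; apply/eqP=> E; move/eqP: hM; apply; exact: val_inj.
set r := pdiv #|M|.
have pr : prime r := pdiv_prime M1.
have rM : r %| #|M| := pdiv_dvd _.
have kr := key nilG nMG Hc r pr rM.
have nNG' : G \subset 'N(N) by case/andP: nNG.
exists r; split => //.
  apply/pgroupP => s ps sM; apply/negPn/negP => sr.
  have [_ [g gG gN]] := properP pNG.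
  have grN : g.`_r \notin N.
    apply: contra gN => H; rewrite -(consttC r g) groupM //; exact: kr.
  have ks := key nilG nMG Hc s ps sM.
  have gre : s^'.-elt g.`_r.
    apply: sub_p_elt (p_elt_constt r g) => q; rewrite !inE => /eqP ->.
    by apply: contra sr => /eqP ->; rewrite inE.
  have grG : g.`_r \in G by rewrite groupX.
  move: (ks _ grG); rewrite (constt_p_elt gre) => H.
  by rewrite H in grN.
apply/pgroupP => s ps sGN.
have [xb xbG oxb] := Cauchy ps sGN.
case/morphimP: xbG => x xN xG xbE.
have H1 : (coset N x).`_r^' = 1.
  by rewrite -morph_constt //=; apply: coset_id; exact: kr.
move/constt1P: H1; rewrite p_eltNK -xbE /p_elt oxb pnatE //.
Qed.
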